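(* Let $n\geq 2$ and let $A$ be an $L_n$-good $n\times n$ matrix with $A_{i,j}=1$. If $A_{i',k}=1$ where $i'\equiv i-1$ or $i'\equiv i+1 \pmod n$, then $k\equiv j-1$ or $k\equiv j+1\pmod n$. (Here row and column indices are taken modulo $n$ in $\{1,\ldots,n\}$, so that index $0$ means $n$ and index $n+1$ means $1$.)
   Context: For $n\geq 2$, $L_n$ is the set of vectors $\vec{x}=(x_1,\ldots,x_n)\in\mathbb{Z}_2^n$ with no $i\in\{1,\ldots,n-1\}$ such that $x_i=x_{i+1}=1$, and with not both $x_1=1$ and $x_n=1$. An $n\times n$ matrix $A$ over $\mathbb{Z}_2$ is $L_n$-good if it is invertible and $A\vec{x}\in L_n$ for all $\vec{x}\in L_n$. $A_{i,j}$ denotes the $(i,j)$ entry of $A$. *)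

(* Defs.v *)
From mathcomp Require Import all_boot all_order all_algebra.
Set Implicit Arguments. Unset Strict Implicit. Unset Printing Implicit Defensive.
Import GRing.Theory.
Local Open Scope ring_scope.

(* Indices 1..n of the paper are represented 0-based by 'I_n (index k+1 <-> k).
   Vectors in Z_2^n are column vectors 'cV['F_2]_n. *)

Definition in_L (n : nat) (x : 'cV['F_2]_n) : bool :=
  [forall i : 'I_n, forall j : 'I_n,
     ((j : nat) == i.+1) ==> ~~ ((x i 0 == 1) && (x j 0 == 1))]
  && [forall i : 'I_n, forall j : 'I_n,
     (((i : nat) == 0%N) && ((j : nat) == n.-1)) ==> ~~ ((x i 0 == 1) && (x j 0 == 1))].

Definition L_good (n : nat) (A : 'M['F_2]_n) : Prop :=
  A \in unitmx /\ forall x : 'cV['F_2]_n, in_L x -> in_L (A *m x).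

Definition cyc_adj (n : nat) (a b : 'I_n) : bool :=
  (b == ordS a) || (b == ord_pred a).

(* Main.v *)
Require Import Defs.
From mathcomp Require Import all_boot all_order all_algebra.
From mathcomp Require Import zify.
Local Open Scope ring_scope.
Set Implicit Arguments.
Import GRing.Theory.

Lemma ordS_val (n : nat) (a : 'I_n) : (ordS a : nat) = if (a.+1 < n)%N then a.+1 else 0%N.
Proof.
rewrite /ordS /=; case: ifP => h; first by rewrite modn_small.
have -> : a.+1 = n by have := ltn_ord a; lia.
by rewrite modnn.
Qed.

Lemma L_noadj (n : nat) (x : 'cV['F_2]_n) (a b : 'I_n) :
  in_L x -> b = ordS a -> x a 0 == 1 -> x b 0 == 1 -> False.
Proof.
move=> /andP [/forallP H1 /forallP H2] eb xa xb; subst b.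
have e := ordS_val a; case h: (a.+1 < n)%N; rewrite h in e.
- move: (H1 a) => /forallP /(_ (ordS a)) /implyP.
  by rewrite e eqxx xa xb => /(_ isT).
- move: (H2 (ordS a)) => /forallP /(_ a) /implyP.
  rewrite e eqxx /= xa xb /= => H; suff: false by []; apply: H.
  apply/eqP; have := ltn_ord a; move: h; lia.
Qed.

Lemma L_of (n : nat) (x : 'cV['F_2]_n) :
  (forall a b : 'I_n, b = ordS a -> x a 0 == 1 -> x b 0 == 1 -> False) -> in_L x.
Proof.
move=> H; apply/andP; split; apply/forallP => i; apply/forallP => j; apply/implyP.
- move=> /eqP e; apply/negP => /andP [xi xj]; apply: (H i j) => //.
  apply/val_inj; change ((j:nat) = ordS i); rewrite ordS_val e /=; have := ltn_ord j; rewrite e => ->; done.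
- case/andP => /eqP e0 /eqP e1; apply/negP => /andP [xi xj]; apply: (H j i) => //.
  apply/val_inj; change ((i:nat) = ordS j); rewrite ordS_val e0 e1; have := ltn_ord j; case: ifP => //; lia.
Qed.

Lemma cyc_adjP (n : nat) (a b : 'I_n) : cyc_adj a b -> b = ordS a \/ a = ordS b.
Proof.
case/orP => /eqP ->; [by left | by right; rewrite ord_predK].
Qed.

Lemma ordS_neq (n : nat) (a : 'I_n) : (1 < n)%N -> ordS a <> a.
Proof.
move=> hn e; have : (ordS a : nat) = a by rewrite e.
rewrite ordS_val; case: ifP => h0; first lia.
move=> e0; have := ltn_ord a; move: e0 hn h0; lia.
Qed.

Definition vjk (n : nat) (j k : 'I_n) : 'cV['F_2]_n :=
  \col_r (((r == j)%:R : 'F_2) + (r == k)%:R).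

Lemma vjk_supp (n : nat) (j k r : 'I_n) : vjk j k r 0 == 1 -> (r == j) || (r == k).
Proof.
rewrite /vjk mxE; case: (r == j); case: (r == k) => //=.
Qed.

Lemma vjk_L (n : nat) (hn : (2 <= n)%N) (j k : 'I_n) : ~~ cyc_adj j k -> in_L (vjk j k).
Proof.
move=> nadj; apply: L_of => a b eb /vjk_supp ha /vjk_supp hb.
have nab : a <> b by move=> e; apply: (ordS_neq (a:=a) hn); rewrite -eb -e.
move: nadj; rewrite /cyc_adj.
case/orP: ha => /eqP ea; case/orP: hb => /eqP eb'.
- by case: nab; rewrite ea eb'.
- by rewrite -ea -eb' eb eqxx.
- by rewrite -ea -eb' eb ordSK eqxx orbT.
- by case: nab; rewrite ea eb'.
Qed.


Lemma col_mul (n : nat) (A : 'M['F_2]_n) (j k r : 'I_n) :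
  (A *m vjk j k) r 0 = A r j + A r k.
Proof.
rewrite mxE /vjk.
under eq_bigr => s _ do rewrite mxE mulrDr.
rewrite big_split /=.
rewrite (bigD1 j) //= (bigD1 k (P := xpredT)) //= !eqxx !mulr1.
rewrite !big1 ?addr0 //.
- by move=> s /negbTE ->; rewrite mulr0.
- by move=> s /negbTE ->; rewrite mulr0.
Qed.

Lemma L_noadj2 (n : nat) (x : 'cV['F_2]_n) (a b : 'I_n) :
  in_L x -> cyc_adj a b -> x a 0 == 1 -> x b 0 == 1 -> False.
Proof.
move=> L /cyc_adjP [] e xa xb; [exact: (L_noadj _ L e xa xb) | exact: (L_noadj _ L e xb xa)].
Qed.

Definition ev (n : nat) (j : 'I_n) : 'cV['F_2]_n := \col_r ((r == j)%:R : 'F_2).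

Lemma ev_L (n : nat) (hn : (2 <= n)%N) (j : 'I_n) : in_L (ev j).
Proof.
apply: L_of => a b eb; rewrite /ev !mxE.
move=> ha hb.
have /eqP ea : a == j by move: ha; case: (a == j) => //; rewrite /= eq_sym oner_eq0.
have /eqP ej : b == j by move: hb; case: (b == j) => //; rewrite /= eq_sym oner_eq0.
by apply: (ordS_neq (a:=j) hn); rewrite -{2}ej eb ea.
Qed.

Lemma ev_mul (n : nat) (A : 'M['F_2]_n) (j r : 'I_n) : (A *m ev j) r 0 = A r j.
Proof.
rewrite mxE /ev (bigD1 j) //= mxE eqxx mulr1 big1 ?addr0 //.
by move=> s /negbTE hs; rewrite mxE hs mulr0.
Qed.

Lemma F2_cases (x : 'F_2) : x = 0 \/ x = 1.
Proof. by case: x => [[|[|m]] hm]; [left; exact: val_inj|right; exact: val_inj|done]. Qed.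

Unset Implicit Arguments.
Theorem lemma4 (n : nat) (hn : (2 <= n)%N) (A : 'M['F_2]_n) (i j i' k : 'I_n) :
  L_good A -> A i j = 1 -> cyc_adj i i' -> A i' k = 1 -> cyc_adj j k.
Proof.
case=> _ HA Aij adj Ai'k; apply/negPn/negP => nadj.
have Lj := HA _ (ev_L hn j).
have Lk := HA _ (ev_L hn k).
case: (eqVneq j k) => [ejk|njk].
  subst k; apply: (L_noadj2 _ _ _ Lj adj); by rewrite ev_mul ?Aij ?Ai'k.
have Ljk := HA _ (@vjk_L _ hn j k nadj).
have A1 : A i' j = 0.
  case: (F2_cases (A i' j)) => // h; exfalso.
  by apply: (L_noadj2 _ _ _ Lj adj); rewrite ev_mul ?Aij ?h.
have A2 : A i k = 0.
  case: (F2_cases (A i k)) => // h; exfalso.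
  by apply: (L_noadj2 _ _ _ Lk adj); rewrite ev_mul ?h ?Ai'k.
apply: (L_noadj2 _ _ _ Ljk adj); rewrite col_mul.
- by rewrite Aij A2 addr0.
- by rewrite A1 Ai'k add0r.
Qed.
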